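(* Let $\Sigma'\subseteq\Sigma$ be alphabets with $\Pi=\Sigma\setminus\Sigma'$ finite, and let $R\subseteq\Sigma^*\times\Sigma^*$ be finite. If $D\subseteq R$ is a family of $\Sigma$-defining relations for $\Pi$ whose derived generator graph $\Gamma_D(D)$ is acyclic, then there exist a set $Q\subseteq(\Sigma')^*\times(\Sigma')^*$ with $|Q|\le|R\setminus D|$ and a sequence of Tietze transformations between $\langle\Sigma\mid R\rangle$ and $\langle\Sigma'\mid Q\rangle$ whose length lies between $n+k$ and $2n+k$, where $n=|R|-|R\cap((\Sigma')^*\times(\Sigma')^* )|-|D|$ and $k=|\Pi|$.
   Context: For an alphabet $\Sigma$, $\Sigma^*$ is the free monoid of words over $\Sigma$. For $R\subseteq\Sigma^*\times\Sigma^*$ (elements written $q\approx r$), $\langle\Sigma\mid R\rangle$ is the quotient of $\Sigma^*$ by the smallest congruence containing $R$, and $u\sim_Rv$ means $u$ rewrites to $v$ by finitely many steps replacing a subword $q$ by $r$ or $r$ by $q$ with $(q,r)\in R$. The Tietze transformations on presentations are: $\mathbf{Gen}(+)$: from $\langle\Sigma\mid R\rangle$ to $\langle\Sigma\cup\{x\}\mid R\cup\{x\approx w\}\rangle$ with $x\notin\Sigma$, $w\in\Sigma^*$; $\mathbf{Gen}(-)$: if $x\approx w$ is in $R$ and $Q=R\setminus\{x\approx w\}\subseteq\Pi^*\times\Pi^*$ where $\Pi=\Sigma\setminus\{x\}$, from $\langle\Sigma\mid R\rangle$ to $\langle\Pi\mid Q\rangle$; $\mathbf{Rel}(+)$: if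 $q\sim_Rr$, from $\langle\Sigma\mid R\rangle$ to $\langle\Sigma\mid R\cup\{q\approx r\}\rangle$; $\mathbf{Rel}(-)$: if $q\approx r$ is in $R$ and $q\sim_Qr$ with $Q=R\setminus\{q\approx r\}$, from $\langle\Sigma\mid R\rangle$ to $\langle\Sigma\mid Q\rangle$. A sequence of Tietze transformations of length $m$ between two presentations is a chain of $m+1$ presentations from the first to the second in which each consecutive pair is related by a single Tietze transformation (applied in either direction). A $\Sigma$-defining relation for $x\in\Sigma$ is a relation $x\approx w$ with $w\in\Sigma^*$; a family of $\Sigma$-defining relations for $\Pi\subseteq\Sigma$ is a set $\{r_x\mid x\in\Pi\}$ with each $r_x$ a $\Sigma$-defining relation for $x$. Its derived generator graph $\Gamma_D(D)$ has vertex set $\Pi$ and an edge $(x,y)$ whenever $y$ occurs in the right-hand side of $r_x$. A directed graph is acyclic if it has no directed path of positive length from a vertex to itself. *)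

(* Defs.v *)
From HB Require Import structures.
From mathcomp Require Import all_boot all_order.
From mathcomp Require Import finmap.
From Stdlib Require Import Relations.
Set Implicit Arguments. Unset Strict Implicit. Unset Printing Implicit Defensive.
Local Open Scope fset_scope.

Section Presentations.
Variable A : choiceType.

Definition word_over (S : pred A) (w : seq A) : bool := all S w.

Definition rel := (seq A * seq A)%type.

Definition rels_over (S : pred A) (R : {fset rel}) : Prop :=
  forall p, p \in R -> word_over S p.1 && word_over S p.2.

Record pres := Pres { palpha : pred A; prels : {fset rel} }.

Definition wf (P : pres) : Prop := rels_over (palpha P) (prels P).

Definition rstep (R : {fset rel}) (u v : seq A) : Prop :=
  exists p s q r, (q, r) \in R /\
    ((u = p ++ q ++ s /\ v = p ++ r ++ s) \/ (u = p ++ r ++ s /\ v = p ++ q ++ s)).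

Definition rconv (R : {fset rel}) : relation (seq A) := clos_refl_trans _ (rstep R).

(* A single Tietze transformation (in its defining direction), applied to a
   well-formed presentation; alphabets are compared extensionally. *)
Inductive tietze : pres -> pres -> Prop :=
| GenPlus (S S2 : pred A) (R : {fset rel}) (x : A) (w : seq A) :
    rels_over S R -> ~~ S x -> word_over S w ->
    (forall a, S2 a = S a || (a == x)) ->
    tietze (Pres S R) (Pres S2 (R `|` [fset ([:: x], w)]))
| GenMinus (S S2 : pred A) (R : {fset rel}) (x : A) (w : seq A) :
    rels_over S R -> ([:: x], w) \in R ->
    (forall a, S2 a = S a && (a != x)) ->
    rels_over S2 (R `\ ([:: x], w)) ->
    tietze (Pres S R) (Pres S2 (R `\ ([:: x], w)))
| RelPlus (S : pred A) (R : {fset rel}) (q r : seq A) :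
    rels_over S R -> word_over S q -> word_over S r -> rconv R q r ->
    tietze (Pres S R) (Pres S (R `|` [fset (q, r)]))
| RelMinus (S : pred A) (R : {fset rel}) (q r : seq A) :
    rels_over S R -> (q, r) \in R -> rconv (R `\ (q, r)) q r ->
    tietze (Pres S R) (Pres S (R `\ (q, r))).

Definition tietze_either (P1 P2 : pres) : Prop := tietze P1 P2 \/ tietze P2 P1.

Inductive tietze_seq : pres -> pres -> nat -> Prop :=
| TSnil P : tietze_seq P P 0
| TScons P1 P2 P3 m : tietze_seq P1 P2 m -> tietze_either P2 P3 ->
    tietze_seq P1 P3 m.+1.

Definition defining_family (S : pred A) (Pi : {fset A}) (D : {fset rel}) : Prop :=
  exists wx : A -> seq A, (forall x, x \in Pi -> word_over S (wx x)) /\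
    D = [fset ([:: x], wx x) | x in Pi].

Definition derived_edge (Pi : {fset A}) (D : {fset rel}) (x y : A) : Prop :=
  x \in Pi /\ y \in Pi /\ exists w, ([:: x], w) \in D /\ y \in w.

Definition acyclic (V : Type) (E : relation V) : Prop :=
  forall v, ~ clos_trans V E v v.

End Presentations.

(* Main.v *)
Require Import Defs.
From HB Require Import structures.
From mathcomp Require Import all_boot all_order.
From mathcomp Require Import finmap zify.
From Stdlib Require Import Relations ClassicalEpsilon Classical FunctionalExtensionality Wf_nat.
Local Open Scope fset_scope.

Module Aux1.
Set Implicit Arguments.
Section Aux.
Variable A : choiceType.
Implicit Types (R C D : {fset (seq A * seq A)}).

Lemma rstep_sym R u v : rstep R u v -> rstep R v u.
Proof. move=> [p [s [q [r [H [[-> ->]|[-> ->]]]]]]]; exists p, s, q, r; tauto. Qed.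

Lemma rconv_sym R u v : rconv R u v -> rconv R v u.
Proof.
elim=> [x y H|x|x y z _ H1 _ H2].
- by apply: rt_step; apply: rstep_sym.
- exact: rt_refl.
- exact: rt_trans H2 H1.
Qed.

Lemma rconv_trans R u v w : rconv R u v -> rconv R v w -> rconv R u w.
Proof. exact: rt_trans. Qed.

Lemma rconv_rel R q r : (q, r) \in R -> rconv R q r.
Proof. by move=> H; apply: rt_step; exists [::], [::], q, r; rewrite !cats0; tauto. Qed.

Lemma rconv_sub R C u v : R `<=` C -> rconv R u v -> rconv C u v.
Proof.
move=> /fsubsetP sub; elim=> [x y H|x|x y z _ H1 _ H2].
- apply: rt_step; move: H => [p [s [q [r [H HH]]]]]; exists p, s, q, r; split=> //; exact: sub.
- exact: rt_refl.
- exact: rt_trans H2.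
Qed.

Lemma rconv_catl R t u v : rconv R u v -> rconv R (t ++ u) (t ++ v).
Proof.
elim=> [x y H|x|x y z _ H1 _ H2].
- apply: rt_step; move: H => [p [s [q [r [H HH]]]]]; exists (t ++ p), s, q, r; split=> //.
  by rewrite -!catA; case: HH => [[-> ->]|[-> ->]]; tauto.
- exact: rt_refl.
- exact: rt_trans H2.
Qed.

Lemma rconv_catr R t u v : rconv R u v -> rconv R (u ++ t) (v ++ t).
Proof.
elim=> [x y H|x|x y z _ H1 _ H2].
- apply: rt_step; move: H => [p [s [q [r [H HH]]]]]; exists p, (s ++ t), q, r; split=> //.
  by rewrite !catA; case: HH => [[-> ->]|[-> ->]]; rewrite -!catA; tauto.
- exact: rt_refl.
- exact: rt_trans H2.
Qed.

Lemma rconv_cat R u v u' v' : rconv R u u' -> rconv R v v' -> rconv R (u ++ v) (u' ++ v').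
Proof. move=> H1 H2; apply: (rt_trans _ _ _ (u' ++ v)); [exact: rconv_catr | exact: rconv_catl]. Qed.

Definition dec (P : Prop) : bool := if excluded_middle_informative P then true else false.
Lemma decP (P : Prop) : dec P <-> P.
Proof. by rewrite /dec; case: excluded_middle_informative. Qed.

Lemma acyclic_wf (E : A -> A -> Prop) (Pi : {fset A}) :
  (forall x y, E x y -> y \in Pi) -> acyclic E -> well_founded (fun y x => E x y).
Proof.
move=> HE Hac.
pose mu x := #|` [fset z in Pi | dec (clos_trans _ E x z)]|.
apply: (well_founded_lt_compat _ mu) => y x Exy; apply/ltP.
apply: fproper_ltn_card; rewrite fproperE; apply/andP; split.
- apply/fsubsetP => z; rewrite !inE /= => /andP[zP /decP H]; rewrite zP /=.
  by apply/decP; apply: t_trans H; apply: t_step.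
- apply/fsubsetP => /(_ y); rewrite !inE /= (HE _ _ Exy) /=.
  have -> : dec (clos_trans A E x y) by apply/decP; apply: t_step.
  by move=> /(_ isT) /decP /Hac.
Qed.

End Aux.
End Aux1.
Import Aux1.
Module Aux2.
Section Main.
Variable A : choiceType.
Variables (Sigma Sigma' : pred A) (Pi : {fset A}) (R D : {fset (seq A * seq A)}).
Variable wx : A -> seq A.
Hypothesis HS : forall a, Sigma' a -> Sigma a.
Hypothesis HPi : forall a, (a \in Pi) = Sigma a && ~~ Sigma' a.
Hypothesis Hwx : forall x, x \in Pi -> word_over Sigma (wx x).
Hypothesis HD : D = [fset ([:: x], wx x) | x in Pi].
Hypothesis Hac : acyclic (derived_edge Pi D).

Lemma memD p : p \in D <-> exists2 x, x \in Pi & p = ([:: x], wx x).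
Proof. by rewrite HD; split => [/imfsetP|[x xP ->]]; [|apply/imfsetP; exists x]. Qed.

Lemma memD1 x w : ([:: x], w) \in D -> x \in Pi /\ w = wx x.
Proof. by move=> /memD [y yP [-> ->]]. Qed.

Lemma edgeE x y : derived_edge Pi D x y <-> [/\ x \in Pi, y \in Pi & y \in wx x].
Proof.
split.
- by move=> [xP [yP [w [/memD1 [_ ->] yw]]]].
- move=> [xP yP yw]; split=> //; split=> //; exists (wx x); split=> //.
  by apply/memD; exists x.
Qed.

Lemma wo_sub w : word_over Sigma' w -> word_over Sigma w.
Proof. by apply: sub_all => a /HS. Qed.

Lemma letter_exp a : Sigma a -> exists w', word_over Sigma' w' /\ rconv D [:: a] w'.
Proof.
have wf := @acyclic_wf A (derived_edge Pi D) Pi (fun x y H => let: And3 _ yP _ := (proj1 (edgeE x y) H) in yP) Hac.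
elim/(well_founded_ind wf): a => a IH Sa.
case Sa': (Sigma' a).
  by exists [:: a]; split; [rewrite /word_over /= Sa'|apply: rt_refl].
have aP : a \in Pi by rewrite HPi Sa Sa'.
have inner : forall w, all (fun y => y \in wx a) w -> exists w', word_over Sigma' w' /\ rconv D w w'.
  elim=> [|y w IHw] /=.
    by move=> _; exists [::]; split=> //; apply: rt_refl.
  move=> /andP [yw /IHw [w2 [H2 H2']]].
  have [w1 [H1 H1']] : exists w', word_over Sigma' w' /\ rconv D [:: y] w'.
    case Sy': (Sigma' y).
      by exists [:: y]; split; [rewrite /word_over /= Sy'|apply: rt_refl].
    have Sy : Sigma y by move: (Hwx a aP) => /allP /(_ y yw).
    have yP : y \in Pi by rewrite HPi Sy Sy'.
    by apply: IH => //; apply/edgeE.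
  exists (w1 ++ w2); split; first by by rewrite /word_over all_cat; apply/andP.
  exact: (@rconv_cat A D [:: y] w w1 w2 H1' H2').
have [w' [H1 H2]] := inner (wx a) (introT allP (fun y h => h)).
exists w'; split=> //; apply: rt_trans H2; apply: rconv_rel; apply/memD; by exists a.
Qed.

Lemma word_exp w : word_over Sigma w -> exists w', word_over Sigma' w' /\ rconv D w w'.
Proof.
elim: w => [|a w IH] /=.
  by move=> _; exists [::]; split=> //; apply: rt_refl.
move=> /andP [Sa /IH [w2 [H2 H2']]].
have [w1 [H1 H1']] := letter_exp a Sa.
exists (w1 ++ w2); split; first by rewrite /word_over all_cat; apply/andP.
exact: (@rconv_cat A D [:: a] w w1 w2 H1' H2').
Qed.


Lemma tseq_cons (P1 P2 P3 : pres A) m :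
  tietze_either P1 P2 -> tietze_seq P2 P3 m -> tietze_seq P1 P3 m.+1.
Proof.
move=> H12 H; elim: H H12 => [P|Q1 Q2 Q3 k _ IH H23] H12.
- exact: TScons (TSnil _) H12.
- exact: TScons (IH H12) H23.
Qed.

Lemma tseq_cat (P1 P2 P3 : pres A) m m' :
  tietze_seq P1 P2 m -> tietze_seq P2 P3 m' -> tietze_seq P1 P3 (m + m').
Proof.
move=> H1 H2; elim: H2 H1 => [P|Q1 Q2 Q3 k _ IH H23] H1; first by rewrite addn0.
by rewrite addnS; exact: TScons (IH H1) H23.
Qed.


Definition overS' (p : seq A * seq A) := word_over Sigma' p.1 && word_over Sigma' p.2.

Lemma phase1 (l : seq (seq A * seq A)) : forall C, uniq l -> rels_over Sigma C -> D `<=` C ->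
  (forall p, p \in l -> [/\ p \in C, p \notin D & ~~ overS' p]) ->
  exists C' (N : {fset (seq A * seq A)}),
    [/\ tietze_seq (Pres Sigma C) (Pres Sigma C') (2 * size l), D `<=` C', rels_over Sigma' N,
        (#|` N| <= size l)%N & forall p, p \in C' -> (p \in C /\ p \notin l) \/ p \in N].
Proof.
elim: l => [|[q r] l IH] C ul HC DC Hl.
  exists C, fset0; split; [exact: TSnil|done|by move=> p; rewrite inE|by rewrite cardfs0|].
  by move=> p pC; left.
move: ul => /= /andP [pl ul].
have [pC pD pbad] := Hl (q, r) (mem_head _ _).
have /andP [Sq Sr] := HC _ pC.
have [q' [Hq' Cq]] := word_exp _ Sq.
have [r' [Hr' Cr]] := word_exp _ Sr.
have sp : (q', r') != (q, r).
  apply/eqP => E; move: pbad; rewrite /overS' -E /= Hq' Hr'; done.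
set C0 := C `|` [fset (q', r')].
set C1 := C0 `\ (q, r).
have HC0 : rels_over Sigma C0.
  move=> p; rewrite in_fsetU in_fset1 => /orP [/HC //|/eqP -> /=].
  by apply/andP; split; apply: wo_sub.
have DC1 : D `<=` C1.
  apply/fsubsetP => p pD'; rewrite in_fsetD1 in_fsetU (fsubsetP DC _ pD') andbT.
  by apply/eqP => E; move: pD; rewrite -E pD'.
have sC1 : (q', r') \in C1 by rewrite in_fsetD1 sp in_fsetU in_fset1 eqxx orbT.
have [C' [N [Hs DC' HN cN HC']]] : exists C' (N : {fset (seq A * seq A)}),
    [/\ tietze_seq (Pres Sigma C1) (Pres Sigma C') (2 * size l), D `<=` C', rels_over Sigma' N,
        (#|` N| <= size l)%N & forall p, p \in C' -> (p \in C1 /\ p \notin l) \/ p \in N].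
  apply: IH => //.
  - by move=> p; rewrite in_fsetD1 => /andP [_ /HC0].
  - move=> p pin; have [pC' pD' pb'] := Hl p (mem_behead (s := (q, r) :: l) pin).
    split=> //; rewrite in_fsetD1 in_fsetU pC' andbT.
    by apply/eqP => E; move: pl; rewrite -E pin.
exists C', ((q', r') |` N); split=> //.
- have -> : 2 * size ((q, r) :: l) = (2 * size l).+2 by rewrite /= mulnS addnC addn2.
  have T1 : tietze (Pres Sigma C) (Pres Sigma C0).
    apply: RelPlus => //; try exact: wo_sub.
    apply: (@rconv_trans A _ _ q); first exact: rconv_sym (rconv_sub _ DC Cq).
    apply: (@rconv_trans A _ _ r); first exact: rconv_rel pC.
    exact: rconv_sub _ DC Cr.
  have T2 : tietze (Pres Sigma C0) (Pres Sigma C1).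
    apply: RelMinus => //; first by rewrite in_fsetU pC.
    apply: (@rconv_trans A _ _ q'); first exact: rconv_sub _ DC1 Cq.
    apply: (@rconv_trans A _ _ r'); first exact: rconv_rel sC1.
    exact: rconv_sym (rconv_sub _ DC1 Cr).
  have E1 : tietze_either (Pres Sigma C) (Pres Sigma C0) by left.
  have E2 : tietze_either (Pres Sigma C0) (Pres Sigma C1) by left.
  exact: (tseq_cons _ _ _ _ E1 (tseq_cons _ _ _ _ E2 Hs)).
- move=> p; rewrite in_fset1U => /orP [/eqP -> /=|/HN //].
  by rewrite Hq' Hr'.
- by rewrite cardfsU1 /=; case: (_ \notin _); rewrite ?add1n ?add0n // ltnW.
- move=> p /HC' [[pC1 pnl]|pN]; last by right; rewrite in_fset1U pN orbT.
  move: pC1; rewrite in_fsetD1 in_fsetU in_fset1 => /andP [pq /orP [pC'|/eqP ->]].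
  + by left; split=> //; rewrite in_cons negb_or pq pnl.
  + by right; rewrite in_fset1U eqxx.
Qed.


Definition SP (P : {fset A}) : pred A := fun a => Sigma' a || (a \in P).
Definition DP (P : {fset A}) : {fset (seq A * seq A)} := [fset ([:: x], wx x) | x in P].
Definition closedP (P : {fset A}) := forall x y, x \in P -> y \in wx x -> y \in Pi -> y \in P.

Lemma DP_mem p P : p \in DP P <-> exists2 x, x \in P & p = ([:: x], wx x).
Proof. by split => [/imfsetP|[x xP ->]]; [|apply/imfsetP; exists x]. Qed.

Lemma ct_flip (E : A -> A -> Prop) u v : clos_trans _ (fun x y => E y x) u v -> clos_trans _ E v u.
Proof.
elim=> [x y H|x y z _ H1 _ H2]; first exact: t_step.
exact: t_trans H2 H1.
Qed.

Lemma source P x0 : x0 \in P -> P `<=` Pi ->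
  exists2 x, x \in P & forall y, y \in P -> x \notin wx y.
Proof.
move=> x0P PPi.
have wf' := @acyclic_wf A (fun x y => derived_edge Pi D y x) Pi
  (fun x y H => let: And3 yP _ _ := (proj1 (edgeE y x) H) in yP)
  (fun v H => Hac v (ct_flip _ _ _ H)).
move: x0P; elim/(well_founded_ind wf'): x0 => x IH xP.
case: (classic (exists2 y, y \in P & x \in wx y)) => [[y yP xy]|H].
- apply: (IH y) => //; apply/edgeE; split => //; exact: (fsubsetP PPi).
- exists x => // y yP; apply/negP => xy; apply: H; by exists y.
Qed.

Lemma rels_SP P Q : P `<=` Pi -> closedP P -> rels_over Sigma' Q -> rels_over (SP P) (DP P `|` Q).
Proof.
move=> PPi cP HQ p; rewrite in_fsetU => /orP [/DP_mem [x xP ->]|/HQ /andP [H1 H2]] /=.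
- apply/andP; split; first by rewrite /word_over /= /SP xP orbT.
  apply/allP => y yw; rewrite /SP.
  have := (allP (Hwx x (fsubsetP PPi _ xP))) y yw.
  case Sy': (Sigma' y) => //= Sy.
  by apply: (cP x) => //; rewrite HPi Sy Sy'.
- by apply/andP; split; apply: sub_all (_ : word_over Sigma' _) => // a Ha; rewrite /SP Ha.
Qed.

Lemma setEq P Q x : x \in P -> x \in Pi -> rels_over Sigma' Q ->
  (DP P `|` Q) `\ ([:: x], wx x) = DP (P `\ x) `|` Q.
Proof.
move=> xP xPi HQ.
have xS' : Sigma' x = false by move: xPi; rewrite HPi => /andP [_ /negbTE].
apply/fsetP => p; rewrite in_fsetD1 !in_fsetU; apply/idP/idP.
- move=> /andP [pnx /orP [/DP_mem [z zP pz]|->]]; last by rewrite orbT.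
  apply/orP; left; apply/DP_mem; exists z => //.
  rewrite in_fsetD1 zP andbT; apply/eqP => zx; move: pnx; by rewrite pz zx eqxx.
- move=> /orP [/DP_mem [z]|pQ].
  + rewrite in_fsetD1 => /andP [zx zP] ->.
    apply/andP; split; last by apply/orP; left; apply/DP_mem; exists z.
    apply/eqP => [[E _]]; move: zx; by rewrite E eqxx.
  + rewrite pQ orbT andbT; apply/eqP => E; move: (HQ _ pQ); rewrite E /=.
    by rewrite /word_over /= xS'.
Qed.

Lemma phase2 k : forall P Q, #|` P| = k -> P `<=` Pi -> closedP P -> rels_over Sigma' Q ->
  tietze_seq (Pres (SP P) (DP P `|` Q)) (Pres Sigma' Q) k.
Proof.
elim: k => [|k IH] P Q cP PPi clP HQ.
  have P0 := cardfs0_eq cP; subst P.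
  have -> : SP fset0 = Sigma'.
    by apply: functional_extensionality => a; rewrite /SP inE orbF.
  have -> : DP fset0 `|` Q = Q.
    apply/fsetP => p; rewrite in_fsetU; apply/idP/idP => [/orP [/DP_mem [x]|//]|->]; last by rewrite orbT.
    by rewrite inE.
  exact: TSnil.
have [x0 x0P] : exists x, x \in P.
  by apply/fset0Pn; rewrite -cardfs_gt0 cP.
have [x xP xsrc] := source _ _ x0P PPi.
have xPi : x \in Pi by exact: (fsubsetP PPi).
have xS' : Sigma' x = false by move: xPi; rewrite HPi => /andP [_ /negbTE].
set P' := P `\ x.
have cP' : #|` P'| = k by move: cP; rewrite (cardfsD1 x P) xP add1n => [[]].
have PPi' : P' `<=` Pi by apply/fsubsetP => a; rewrite in_fsetD1 => /andP [_ /(fsubsetP PPi)].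
have clP' : closedP P'.
  move=> z y; rewrite !in_fsetD1 => /andP [_ zP] yz yPi.
  rewrite (clP z y zP yz yPi) andbT; apply/eqP => yx.
  by move: (xsrc z zP); rewrite -yx yz.
have T : tietze (Pres (SP P) (DP P `|` Q)) (Pres (SP P') (DP P' `|` Q)).
  rewrite -(setEq P Q x xP xPi HQ).
  apply: GenMinus.
  - exact: rels_SP.
  - by rewrite in_fsetU; apply/orP; left; apply/DP_mem; exists x.
  - move=> a; rewrite /SP /P' in_fsetD1.
    case: (eqVneq a x) => [->|]; by rewrite ?xS' ?andbF ?andbT.
  - rewrite (setEq P Q x xP xPi HQ); exact: rels_SP.
exact: (tseq_cons _ _ _ _ (or_introl T) (IH P' Q cP' PPi' clP' HQ)).
Qed.


Lemma main_sec : rels_over Sigma R -> D `<=` R ->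
  exists (Q : {fset (seq A * seq A)}) (m : nat),
    rels_over Sigma' Q /\ (#|` Q| <= #|` R `\` D|)%N /\
    ((#|` R| - #|` [fset p in R | word_over Sigma' p.1 && word_over Sigma' p.2]|
            - #|` D|) + #|` Pi| <= m <= 2 * (#|` R| - #|` [fset p in R | word_over Sigma' p.1 && word_over Sigma' p.2]|
            - #|` D|) + #|` Pi|)%N /\
    tietze_seq (Pres Sigma R) (Pres Sigma' Q) m.
Proof.
move=> HR HDR.
set RS := [fset p in R | word_over Sigma' p.1 && word_over Sigma' p.2].
set bad := (R `\` D) `\` RS.
have DnS : forall p, p \in D -> ~~ overS' p.
  move=> p /memD [x xP ->]; rewrite /overS' /= /word_over /=.
  by move: xP; rewrite HPi => /andP [_ /negbTE ->].
have Hbad : forall p, p \in enum_fset bad -> [/\ p \in R, p \notin D & ~~ overS' p].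
  move=> p; rewrite -[p \in enum_fset bad]/(p \in bad) !inE /= => /andP [pRS /andP [pD pR]].
  by split => //; move: pRS; rewrite pR.
have [C' [N [Hs DC' HN cN HC']]] := phase1 (enum_fset bad) R (fset_uniq bad) HR HDR Hbad.
set Q := C' `\` D.
have HQ : rels_over Sigma' Q.
  move=> p; rewrite in_fsetD => /andP [pD /HC' [[pR pnb]|/HN //]].
  move: pnb; rewrite -[p \in enum_fset bad]/(p \in bad) !inE /= pD pR /= andbT.
  by move/negbNE.
have RSsub : RS `<=` R `\` D.
  apply/fsubsetP => p; rewrite !inE /= => /andP [pR pS]; rewrite pR andbT.
  by apply/negP => /DnS; rewrite /overS' pS.
have c1 : (#|` D| + #|` R `\` D| = #|` R|)%N.
  by rewrite -{1}(fsetIidPr HDR) cardfsID.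
have c2 : (#|` RS| + #|` bad| = #|` R `\` D|)%N.
  by rewrite -{1}(fsetIidPr RSsub) cardfsID.
have badsub : bad `<=` R `\` D by apply/fsubsetP => p; rewrite /bad [p \in (_ `\` RS)]in_fsetD => /andP [_ ->].
have c3 : (#|` bad| + #|` (R `\` D) `\` bad| = #|` R `\` D|)%N.
  by rewrite -{1}(fsetIidPr badsub) cardfsID.
exists Q, (2 * #|` bad| + #|` Pi|)%N; split=> //; split.
  have sub : Q `<=` ((R `\` D) `\` bad) `|` N.
    apply/fsubsetP => p; rewrite in_fsetD => /andP [pD /HC' [[pR pnb]|pN]]; rewrite in_fsetU.
    + have pnb' : p \notin bad := pnb. by rewrite in_fsetD pnb' in_fsetD pD pR.
    + by rewrite pN orbT.
  apply: leq_trans (fsubset_leq_card sub) _.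
  rewrite cardfsU; have cN' : (#|` N| <= #|` bad|)%N by exact: cN.
  lia.
split; first lia.
have HSP : SP Pi = Sigma.
  apply: functional_extensionality => a; rewrite /SP HPi.
  by case Sa': (Sigma' a); rewrite ?orbF ?andbT //= (HS a Sa').
have HDP : DP Pi = D by rewrite HD.
have HU : DP Pi `|` Q = C'.
  rewrite HDP; apply/fsetP => p; rewrite in_fsetU in_fsetD.
  by case pD: (p \in D); rewrite //= (fsubsetP DC' _ pD).
have H2 := phase2 #|` Pi| Pi Q erefl (fsubset_refl _) (fun x y _ _ yP => yP) HQ.
rewrite HSP HU in H2.
exact: tseq_cat _ _ _ _ _ Hs H2.
Qed.

End Main.
End Aux2.
Import Aux2.

Theorem theorem8 (A : choiceType) (Sigma Sigma' : pred A) (Pi : {fset A})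
    (R D : {fset (seq A * seq A)}) :
  (forall a, Sigma' a -> Sigma a) ->
  (forall a, (a \in Pi) = Sigma a && ~~ Sigma' a) ->
  rels_over Sigma R ->
  D `<=` R ->
  defining_family Sigma Pi D ->
  acyclic (derived_edge Pi D) ->
  let n := (#|` R| - #|` [fset p in R | word_over Sigma' p.1 && word_over Sigma' p.2]|
            - #|` D|)%N in
  let k := #|` Pi| in
  exists (Q : {fset (seq A * seq A)}) (m : nat),
    rels_over Sigma' Q /\ (#|` Q| <= #|` R `\` D|)%N /\
    (n + k <= m <= 2 * n + k)%N /\
    tietze_seq (Pres Sigma R) (Pres Sigma' Q) m.
Proof.
move=> HS HPi HR HDR [wx [Hwx HD]] Hac n k.
exact: (@main_sec A Sigma Sigma' Pi R D wx HS HPi Hwx HD Hac HR HDR).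
Qed.
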